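(* Let $(V,\nu)$ and $(W,\mu)$ be strongly complete PN-spaces and let $T\in B(V,W)$ be bijective. Then the inverse $T^{-1}:W\to V$ belongs to $B(W,V)$, i.e. it is a linear operator continuous for the strong topologies.
   Context: A distance distribution function is a map $F:[-\infty,+\infty]\to[0,1]$ that is nondecreasing, left-continuous on $\mathbb{R}$, with $F(-\infty)=0$, $F(+\infty)=1$ and $F(0)=0$; the set of these is $\Delta^+$. $\mathcal{D}^+\subseteq\Delta^+$ denotes the proper ones, i.e. those with $\lim_{x\to+\infty}F(x)=1$. $H_0\in\Delta^+$ is $H_0(x)=0$ for $x\le 0$ and $H_0(x)=1$ for $x>0$. For $F,G\in\Delta^+$ let $\tau_M(F,G)(x)=\sup\{\min(F(s),G(t)) : s+t=x\}$. In this paper a PN-space $(V,\nu)$ is a real vector space $V$ with a map $\nu:V\to\Delta^+$, $p\mapsto\nu_p$, such that for all $p,q\in V$: $\nu_p=H_0$ iff $p=0$; $\nu_{p+q}\ge\tau_M(\nu_p,\nu_q)$ pointwise; and $\nu_{\alpha p}(x)=\nu_p(x/|\alpha|)$ for all real $\alpha\neq0$ and $x\ge 0$. Standing assumption: $\nu_p\in\mathcal{D}^+$ for every $p\in V$. For $x\in V$ and $w\in(0,1)$ put $\|x\|_w=\sup\{t\in\mathbb{R}:\nu_x(t)<w\}$; for each $w$ this is a norm on $V$, and $w\mapsto\|x\|_w$ is nondecreasing. For $p\in V$, $r>0$, $w\in(0,1)$ put $B_w(p;r)=\{x\in V:\|x-p\|_w<r\}$. The strong topology on $V$ is generated by the neighbourhoods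 $N_p(t)=\{q\in V:\nu_{p-q}(t)>1-t\}$, $p\in V$, $t>0$; equivalently the family $\{B_w(p;r)\}$ is a basis for it. A sequence $(p_n)$ converges strongly to $p$ if for every $t>0$ one has $p_n\in N_p(t)$ for all large $n$; it is strongly Cauchy if for every $t>0$ there is $N$ with $\nu_{p_n-p_m}(t)>1-t$ for all $m,n>N$. $(V,\nu)$ is strongly complete if every strongly Cauchy sequence converges strongly. $B(V,W)$ denotes the set of linear operators $V\to W$ that are continuous for the strong topologies. *)

(* Defs.v *)
From Stdlib Require Import Reals Lra.
Open Scope R_scope.

Record RVS := {
  vcar :> Type;
  vzero : vcar;
  vadd : vcar -> vcar -> vcar;
  vopp : vcar -> vcar;
  vscal : R -> vcar -> vcar;
  vadd_assoc : forall x y z, vadd x (vadd y z) = vadd (vadd x y) z;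
  vadd_comm : forall x y, vadd x y = vadd y x;
  vadd_0 : forall x, vadd x vzero = x;
  vadd_opp : forall x, vadd x (vopp x) = vzero;
  vscal_assoc : forall a b x, vscal a (vscal b x) = vscal (a * b) x;
  vscal_1 : forall x, vscal 1 x = x;
  vscal_addr : forall a x y, vscal a (vadd x y) = vadd (vscal a x) (vscal a y);
  vscal_addl : forall a b x, vscal (a + b) x = vadd (vscal a x) (vscal b x)
}.

Definition vsub {V : RVS} (x y : V) : V := vadd V x (vopp V y).

(** Distance distribution functions.  An element F of Delta^+ is a map on
    [-oo,+oo]; since F(-oo)=0 and F(+oo)=1 are forced, we represent F by its
    restriction to R. *)
Definition is_ddf (F : R -> R) : Prop :=
  (forall x, 0 <= F x <= 1) /\
  (forall x y, x <= y -> F x <= F y) /\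
  (forall x eps, 0 < eps -> exists d, 0 < d /\
       forall y, x - d < y < x -> F x - F y < eps) /\
  F 0 = 0.

Definition is_proper (F : R -> R) : Prop :=
  forall eps, 0 < eps -> exists M, forall x, M <= x -> Rabs (F x - 1) < eps.

Definition H0 (x : R) : R := if Rle_dec x 0 then 0 else 1.

(** tau_M(F,G) <= H pointwise on R, i.e. sup_{s+t=x} min(F s, G t) <= H x.
    (At x = +oo both sides equal 1.) *)
Definition tauM_le (F G H : R -> R) : Prop :=
  forall x s t, s + t = x -> Rmin (F s) (G t) <= H x.

(** PN-spaces (with the standing assumption nu_p in D^+) *)
Record PNSpace := {
  pn_vs :> RVS;
  nu : pn_vs -> R -> R;
  nu_ddf : forall p, is_ddf (nu p);
  nu_proper : forall p, is_proper (nu p);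
  nu_H0 : forall p, (forall x, nu p x = H0 x) <-> p = vzero pn_vs;
  nu_triangle : forall p q, tauM_le (nu p) (nu q) (nu (vadd pn_vs p q));
  nu_scal : forall p a x, a <> 0 -> 0 <= x ->
      nu (vscal pn_vs a p) x = nu p (x / Rabs a)
}.

Definition Nbd {V : PNSpace} (p : V) (t : R) (q : V) : Prop :=
  nu V (vsub p q) t > 1 - t.

Definition strongly_open {V : PNSpace} (U : V -> Prop) : Prop :=
  forall p, U p -> exists t, 0 < t /\ forall q, Nbd p t q -> U q.

Definition strongly_continuous {V W : PNSpace} (f : V -> W) : Prop :=
  forall U : W -> Prop, strongly_open U -> strongly_open (fun x => U (f x)).

Definition is_linear {V W : PNSpace} (f : V -> W) : Prop :=
  (forall x y, f (vadd V x y) = vadd W (f x) (f y)) /\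
  (forall a x, f (vscal V a x) = vscal W a (f x)).

Definition in_B {V W : PNSpace} (f : V -> W) : Prop :=
  is_linear f /\ strongly_continuous f.

Definition strongly_converges {V : PNSpace} (s : nat -> V) (p : V) : Prop :=
  forall t, 0 < t -> exists N, forall n, (N <= n)%nat -> Nbd p t (s n).

Definition strongly_Cauchy {V : PNSpace} (s : nat -> V) : Prop :=
  forall t, 0 < t -> exists N, forall m n, (N < m)%nat -> (N < n)%nat ->
    nu V (vsub (s n) (s m)) t > 1 - t.

Definition strongly_complete (V : PNSpace) : Prop :=
  forall s : nat -> V, strongly_Cauchy s -> exists p, strongly_converges s p.

(* Main.v *)
Require Import Defs.
From Stdlib Require Import Reals Lra Lia ZArith Classical ClassicalEpsilon.
Open Scope R_scope.

Lemma nat_above (M : R) : exists n : nat, M <= INR n.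
Proof.
  destruct (archimed M) as [H1 _].
  exists (Z.abs_nat (up M)).
  rewrite INR_IZR_INZ, Zabs2Nat.id_abs.
  assert (IZR (up M) <= IZR (Z.abs (up M))) by (apply IZR_le; lia). lra.
Qed.

Section Alg.
End Alg.

Lemma vadd_0l (V : RVS) (x : V) : vadd V (vzero V) x = x.
Proof. rewrite vadd_comm; apply vadd_0. Qed.

Lemma vadd_cancel (V : RVS) (a x y : V) : vadd V a x = vadd V a y -> x = y.
Proof.
  intro H.
  assert (E : vadd V (vopp V a) (vadd V a x) = vadd V (vopp V a) (vadd V a y)) by now rewrite H.
  rewrite !vadd_assoc in E. rewrite (vadd_comm V (vopp V a) a), vadd_opp, !vadd_0l in E. exact E.
Qed.

Lemma vscal_0 (V : RVS) (x : V) : vscal V 0 x = vzero V.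
Proof.
  apply (vadd_cancel V (vscal V 0 x)). rewrite <- vscal_addl, Rplus_0_r, vadd_0. reflexivity.
Qed.

Lemma vopp_scal (V : RVS) (x : V) : vopp V x = vscal V (-1) x.
Proof.
  apply (vadd_cancel V x). rewrite vadd_opp.
  transitivity (vadd V (vscal V 1 x) (vscal V (-1) x)).
  2: now rewrite vscal_1.
  rewrite <- vscal_addl. replace (1 + -1) with 0 by ring. rewrite vscal_0. reflexivity.
Qed.

Lemma vopp_opp (V : RVS) (x : V) : vopp V (vopp V x) = x.
Proof. rewrite !vopp_scal, vscal_assoc. replace (-1 * -1) with 1 by ring. apply vscal_1. Qed.

Lemma vopp_add (V : RVS) (x y : V) : vopp V (vadd V x y) = vadd V (vopp V x) (vopp V y).
Proof. rewrite !vopp_scal. apply vscal_addr. Qed.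

Lemma vopp_0 (V : RVS) : vopp V (vzero V) = vzero V.
Proof. rewrite <- (vadd_0l V (vopp V (vzero V))). apply vadd_opp. Qed.

Lemma vswap (V : RVS) (a b c : V) : vadd V a (vadd V b c) = vadd V b (vadd V a c).
Proof. rewrite !vadd_assoc, (vadd_comm V a b). reflexivity. Qed.

Lemma vsub_xx (V : RVS) (x : V) : vsub x x = vzero V.
Proof. apply vadd_opp. Qed.

Lemma vsub_chain (V : RVS) (p q r : V) : vsub p q = vadd V (vsub p r) (vsub r q).
Proof.
  unfold vsub. rewrite <- vadd_assoc, (vadd_assoc V (vopp V r) r), (vadd_comm V (vopp V r) r), vadd_opp, vadd_0l.
  reflexivity.
Qed.

Lemma vopp_sub (V : RVS) (p q : V) : vopp V (vsub p q) = vsub q p.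
Proof. unfold vsub. rewrite vopp_add, vopp_opp, vadd_comm. reflexivity. Qed.

Lemma vsub_0 (V : RVS) (p q : V) : vsub p q = vzero V -> p = q.
Proof.
  intro H. assert (E : vadd V (vsub p q) q = vadd V (vzero V) q) by now rewrite H.
  unfold vsub in E. rewrite <- vadd_assoc, (vadd_comm V (vopp V q) q), vadd_opp, vadd_0, vadd_0l in E. exact E.
Qed.

Lemma vscal_sub (V : RVS) (c : R) (p q : V) : vscal V c (vsub p q) = vsub (vscal V c p) (vscal V c q).
Proof. unfold vsub. rewrite vscal_addr, !vopp_scal, !vscal_assoc, Rmult_comm. reflexivity. Qed.

Lemma vscal_inv (V : RVS) (c : R) (p : V) : c <> 0 -> vscal V c (vscal V (/ c) p) = p.
Proof. intro. rewrite vscal_assoc, Rinv_r by exact H. apply vscal_1. Qed.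

Lemma vsub_sub_self (V : RVS) (a b : V) : vsub a (vsub a b) = b.
Proof. unfold vsub. rewrite vopp_add, vopp_opp, vadd_assoc, vadd_opp, vadd_0l. reflexivity. Qed.

Lemma vsub_add (V : RVS) (a b c : V) : vsub (vsub a b) c = vsub a (vadd V b c).
Proof. unfold vsub. rewrite vopp_add, vadd_assoc. reflexivity. Qed.

Lemma vsub_addl (V : RVS) (a x b : V) : vsub (vadd V a x) b = vadd V (vsub a b) x.
Proof. unfold vsub. rewrite <- !vadd_assoc, (vadd_comm V x). reflexivity. Qed.

Lemma vsub_decomp (V : RVS) (x s : V) : x = vadd V (vsub x s) s.
Proof. unfold vsub. rewrite <- vadd_assoc, (vadd_comm V (vopp V s) s), vadd_opp, vadd_0. reflexivity. Qed.

Lemma vA3 (V : RVS) (y0 y1 u v : V) :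
  vsub y1 (vsub u v) = vsub (vsub y0 u) (vsub (vsub y0 y1) v).
Proof.
  unfold vsub. rewrite !vopp_add, !vopp_opp.
  rewrite <- !vadd_assoc.
  rewrite (vswap V (vopp V u) (vopp V y0)).
  rewrite (vadd_assoc V y0 (vopp V y0)), vadd_opp, vadd_0l.
  rewrite (vswap V (vopp V u) y1). reflexivity.
Qed.
Section Dummy. End Dummy.

Lemma nu_bounds (X : PNSpace) (p : X) x : 0 <= nu X p x <= 1.
Proof. destruct (nu_ddf X p) as [H _]. apply H. Qed.

Lemma nu_mono (X : PNSpace) (p : X) x y : x <= y -> nu X p x <= nu X p y.
Proof. destruct (nu_ddf X p) as [_ [H _]]. apply H. Qed.

Lemma nu_at0 (X : PNSpace) (p : X) : nu X p 0 = 0.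
Proof. destruct (nu_ddf X p) as [_ [_ [_ H]]]. exact H. Qed.

Lemma nu_nonpos (X : PNSpace) (p : X) x : x <= 0 -> nu X p x = 0.
Proof.
  intro H. pose proof (nu_mono X p x 0 H). rewrite nu_at0 in H0.
  pose proof (nu_bounds X p x). lra.
Qed.

Lemma nu_tri (X : PNSpace) (p q : X) a b :
  Rmin (nu X p a) (nu X q b) <= nu X (vadd X p q) (a + b).
Proof. apply (nu_triangle X p q (a+b) a b). reflexivity. Qed.

Lemma nu_zero_pos (X : PNSpace) x : 0 < x -> nu X (vzero X) x = 1.
Proof.
  intro H. destruct (nu_H0 X (vzero X)) as [_ E]. rewrite E by reflexivity.
  unfold H0. destruct (Rle_dec x 0); lra.
Qed.

Lemma nu_opp (X : PNSpace) (p : X) x : nu X (vopp X p) x = nu X p x.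
Proof.
  destruct (Rle_dec x 0) as [Hx|Hx].
  - rewrite !nu_nonpos; auto.
  - rewrite vopp_scal, nu_scal by lra. replace (Rabs (-1)) with 1 by (rewrite Rabs_left; lra). f_equal. field.
Qed.

Lemma nu_sub_sym (X : PNSpace) (p q : X) x : nu X (vsub p q) x = nu X (vsub q p) x.
Proof. rewrite <- (vopp_sub X p q). symmetry. apply nu_opp. Qed.

Lemma nu_scal_pos (X : PNSpace) (p : X) c a : 0 < c -> 0 <= a ->
  nu X (vscal X c p) a = nu X p (a / c).
Proof. intros. rewrite nu_scal by lra. rewrite Rabs_right by lra. reflexivity. Qed.

Lemma U_pos (X : PNSpace) (p : X) a : nu X p a > 1 - a -> 0 < a.
Proof. intro H. pose proof (nu_bounds X p a). lra. Qed.

Lemma U_mono (X : PNSpace) (p : X) a b : a <= b -> nu X p a > 1 - a -> nu X p b > 1 - b.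
Proof. intros H1 H2. pose proof (nu_mono X p a b H1). lra. Qed.

Lemma U_add (X : PNSpace) (p q : X) a b : nu X p a > 1 - a -> nu X q b > 1 - b ->
  nu X (vadd X p q) (a + b) > 1 - (a + b).
Proof.
  intros H1 H2. pose proof (U_pos X p a H1). pose proof (U_pos X q b H2).
  pose proof (nu_tri X p q a b). unfold Rmin in H3. destruct (Rle_dec _ _); lra.
Qed.

Lemma U_zero (X : PNSpace) a : 0 < a -> nu X (vzero X) a > 1 - a.
Proof. intro. rewrite nu_zero_pos by lra. lra. Qed.

Lemma Nrefl (X : PNSpace) (p : X) a : 0 < a -> Nbd p a p.
Proof. intro. unfold Nbd. rewrite vsub_xx. apply U_zero; auto. Qed.

Lemma Nmono (X : PNSpace) (p q : X) a b : a <= b -> Nbd p a q -> Nbd p b q.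
Proof. unfold Nbd. apply U_mono. Qed.

Lemma Nsym (X : PNSpace) (p q : X) a : Nbd p a q -> Nbd q a p.
Proof. unfold Nbd. rewrite nu_sub_sym. auto. Qed.

Lemma Ntri (X : PNSpace) (p q z : X) a b : Nbd p a q -> Nbd q b z -> Nbd p (a + b) z.
Proof. unfold Nbd. intros. rewrite (vsub_chain X p z q). apply U_add; auto. Qed.

Lemma Nopen (X : PNSpace) (y z : X) s : Nbd y s z ->
  exists e, 0 < e /\ forall w, Nbd z e w -> Nbd y s w.
Proof.
  unfold Nbd. intro H. pose proof (U_pos X _ _ H) as Hs.
  destruct (nu_ddf X (vsub y z)) as [_ [_ [Hlc _]]].
  destruct (Hlc s (nu X (vsub y z) s - (1 - s))) as [d [Hd Hd2]]; [lra|].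
  exists (Rmin d s / 2). split. { unfold Rmin; destruct (Rle_dec d s); lra. }
  intros w Hw.
  assert (Hm : 0 < Rmin d s) by (unfold Rmin; destruct (Rle_dec d s); lra).
  assert (Hm1 : Rmin d s <= d) by apply Rmin_l.
  assert (Hm2 : Rmin d s <= s) by apply Rmin_r.
  pose proof (Hd2 (s - Rmin d s / 2) ltac:(lra)) as H1.
  pose proof (nu_tri X (vsub y z) (vsub z w) (s - Rmin d s / 2) (Rmin d s / 2)) as H2.
  replace (s - Rmin d s / 2 + Rmin d s / 2) with s in H2 by ring.
  rewrite <- vsub_chain in H2.
  unfold Rmin at 1 in H2. destruct (Rle_dec _ _); lra.
Qed.

Lemma Heq (X : PNSpace) (a b : X) : (forall r, 0 < r -> Nbd a r b) -> a = b.
Proof.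
  intro H. apply vsub_0. apply (nu_H0 X). intro x. unfold H0.
  destruct (Rle_dec x 0) as [Hx|Hx].
  - apply nu_nonpos; auto.
  - pose proof (nu_bounds X (vsub a b) x).
    destruct (Rle_dec 1 (nu X (vsub a b) x)). lra.
    exfalso. set (r := Rmin x (1 - nu X (vsub a b) x)).
    assert (0 < r) by (unfold r, Rmin; destruct (Rle_dec _ _); lra).
    pose proof (H r H1). unfold Nbd in H2.
    pose proof (nu_mono X (vsub a b) r x (Rmin_l _ _)).
    pose proof (Rmin_r x (1 - nu X (vsub a b) x)). fold r in H4. lra.
Qed.

Lemma lin_vopp (V W : PNSpace) (f : V -> W) : is_linear f -> forall x, f (vopp V x) = vopp W (f x).
Proof. intros [_ H] x. rewrite !vopp_scal. apply H. Qed.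

Lemma lin_vsub (V W : PNSpace) (f : V -> W) : is_linear f -> forall x y, f (vsub x y) = vsub (f x) (f y).
Proof. intros Hf x y. unfold vsub. rewrite (proj1 Hf), (lin_vopp V W f Hf). reflexivity. Qed.

Lemma cont_at (V W : PNSpace) (f : V -> W) : strongly_continuous f ->
  forall x r, 0 < r -> exists e, 0 < e /\ forall q, Nbd x e q -> Nbd (f x) r (f q).
Proof.
  intros Hc x r Hr.
  set (O := fun z : W => exists e, 0 < e /\ forall z', Nbd z e z' -> Nbd (f x) r z').
  assert (HO : strongly_open O).
  { intros p [e [He Hp]]. exists (e/2). split; [lra|]. intros q Hq.
    exists (e/2). split; [lra|]. intros z' Hz'. apply Hp.
    replace e with (e/2 + e/2) by field. eapply Ntri; eauto. }
  destruct (Hc O HO x) as [t [Ht Hx]].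
  { exists r. split; auto. }
  exists t. split; auto. intros q Hq. destruct (Hx q Hq) as [e [He He2]].
  apply He2. apply Nrefl; auto.
Qed.

Lemma baire (W : PNSpace) (hW : strongly_complete W) (P : nat -> W -> Prop)
  (cover : forall w, exists n, P n w) :
  exists n y0 s0, 0 < s0 /\ forall z, Nbd y0 s0 z -> forall r, 0 < r ->
     exists a, P n a /\ Nbd z r a.
Proof.
  apply NNPP; intro Hn.
  assert (H : forall n (y0 : W) s0, 0 < s0 -> exists z r, Nbd y0 s0 z /\ 0 < r /\
             forall a, P n a -> ~ Nbd z r a).
  { intros n y0 s0 Hs0. apply NNPP; intro H'. apply Hn. exists n, y0, s0. split; auto.
    intros z Hz r Hr. apply NNPP; intro H''. apply H'. exists z, r. split; auto. split; auto.
    intros a Ha Hna. apply H''. exists a. auto. }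
  assert (Hstep : forall k (y : W) s, exists p : W * R, 0 < s ->
     0 < snd p /\ snd p <= s / 2 /\ (forall w, Nbd (fst p) (2 * snd p) w -> Nbd y s w) /\
     (forall a, P k a -> ~ Nbd (fst p) (2 * snd p) a)).
  { intros k y s. destruct (Rlt_dec 0 s) as [Hs|Hs].
    2: { exists (y, s). intro; lra. }
    destruct (H k y s Hs) as [z [r [Hz [Hr Hav]]]].
    destruct (Nopen W y z s Hz) as [e [He He2]].
    set (s' := Rmin e (Rmin r s) / 2).
    assert (h1 : Rmin e (Rmin r s) <= e) by apply Rmin_l.
    assert (h2 : Rmin e (Rmin r s) <= Rmin r s) by apply Rmin_r.
    assert (h3 : Rmin r s <= r) by apply Rmin_l.
    assert (h4 : Rmin r s <= s) by apply Rmin_r.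
    assert (h5 : 0 < Rmin r s) by (unfold Rmin; destruct (Rle_dec r s); lra).
    assert (h6 : 0 < Rmin e (Rmin r s)) by (unfold Rmin at 1; destruct (Rle_dec _ _); lra).
    exists (z, s'). intros _. simpl. unfold s'. split; [lra|]. split; [lra|]. split.
    - intros w Hw. apply He2. eapply Nmono; [|exact Hw]. lra.
    - intros a Ha Hna. apply (Hav a Ha). eapply Nmono; [|exact Hna]. lra. }
  set (step := fun k y s => proj1_sig (constructive_indefinite_description _ (Hstep k y s))).
  assert (Hspec : forall k y s, 0 < s ->
     0 < snd (step k y s) /\ snd (step k y s) <= s / 2 /\
     (forall w, Nbd (fst (step k y s)) (2 * snd (step k y s)) w -> Nbd y s w) /\
     (forall a, P k a -> ~ Nbd (fst (step k y s)) (2 * snd (step k y s)) a)).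
  { intros k y s Hs. unfold step. destruct (constructive_indefinite_description _ _) as [p Hp].
    simpl. apply Hp; auto. }
  clearbody step.
  set (sq := fix f (n : nat) : W * R := match n with
        | O => (vzero W, 1) | S n => step n (fst (f n)) (snd (f n)) end).
  assert (Hpos : forall n, 0 < snd (sq n)).
  { induction n. simpl; lra. apply (Hspec n _ _ IHn). }
  assert (Hsmall : forall n, snd (sq n) <= (/2) ^ n).
  { induction n. simpl; lra. simpl (sq (S n)).
    destruct (Hspec n (fst (sq n)) (snd (sq n)) (Hpos n)) as [_ [h _]].
    simpl. lra. }
  assert (Hball : forall k d w, Nbd (fst (sq (d + k)%nat)) (snd (sq (d + k)%nat)) w ->
             Nbd (fst (sq k)) (snd (sq k)) w).
  { intros k d. induction d; intros w Hw. exact Hw.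
    apply IHd. simpl in Hw.
    destruct (Hspec (d + k)%nat (fst (sq (d + k)%nat)) (snd (sq (d + k)%nat)) (Hpos (d + k)%nat)) as [h1 [_ [h3 _]]].
    apply h3. eapply Nmono; [|exact Hw]. lra. }
  assert (Hin : forall k m, (k <= m)%nat -> Nbd (fst (sq k)) (snd (sq k)) (fst (sq m))).
  { intros k m Hkm. replace m with ((m - k) + k)%nat by lia. apply (Hball k (m - k)%nat).
    apply Nrefl. apply Hpos. }
  assert (HC : strongly_Cauchy (fun n => fst (sq n))).
  { intros t Ht. destruct (pow_lt_1_zero (/2) ltac:(rewrite Rabs_right; lra) (t/2) ltac:(lra))
      as [N HN].
    exists N. intros m n Hm Hn'.
    pose proof (Hin N n ltac:(lia)) as A1. pose proof (Hin N m ltac:(lia)) as A2.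
    pose proof (Ntri _ _ _ _ _ _ (Nsym _ _ _ _ A1) A2) as A3.
    pose proof (HN N (le_n N)). rewrite Rabs_right in H0 by (apply Rle_ge, pow_le; lra).
    pose proof (Hsmall N).
    assert (Nbd (fst (sq n)) t (fst (sq m))) by (eapply Nmono; [|exact A3]; lra).
    exact H2. }
  destruct (hW _ HC) as [y Hy].
  destruct (cover y) as [k Hk].
  destruct (Hy (snd (sq (S k))) (Hpos (S k))) as [N HN].
  pose proof (HN (Nat.max N (S k)) (Nat.le_max_l _ _)) as B1.
  pose proof (Hin (S k) (Nat.max N (S k)) (Nat.le_max_r _ _)) as B2.
  pose proof (Ntri _ _ _ _ _ _ B2 (Nsym _ _ _ _ B1)) as B3.
  destruct (Hspec k (fst (sq k)) (snd (sq k)) (Hpos k)) as [_ [_ [_ h4]]].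
  apply (h4 y Hk). simpl (sq (S k)) in B3.
  eapply Nmono; [|exact B3]. lra.
Qed.

Lemma density (V W : PNSpace) (T : V -> W) (hT : is_linear T) (Tinv : W -> V)
  (hr : forall y, T (Tinv y) = y) (hW : strongly_complete W) :
  forall t, 0 < t -> exists s, 0 < s /\ forall y, nu W y s > 1 - s ->
    forall r, 0 < r -> exists x, nu V x t > 1 - t /\ Nbd y r (T x).
Proof.
  intros t Ht.
  set (P := fun (n : nat) (w : W) => exists x, nu V x (INR n + 1) > 1 - t/2 /\ T x = w).
  assert (cover : forall w, exists n, P n w).
  { intro w. destruct (nu_proper V (Tinv w) (t/2) ltac:(lra)) as [M HM].
    destruct (nat_above M) as [n Hn]. exists n, (Tinv w). split; auto.
    pose proof (HM (INR n + 1) ltac:(lra)). apply Rabs_def2 in H. lra. }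
  destruct (baire W hW P cover) as [n [y0 [s0 [Hs0 Hcl]]]].
  set (N := INR n + 1).
  assert (HN : 0 < N) by (unfold N; pose proof (pos_INR n); lra).
  set (c := t / (2 * N)).
  assert (Hc : 0 < c) by (unfold c; apply Rdiv_lt_0_compat; lra).
  exists (Rmin (s0 * c) s0). split.
  { unfold Rmin; destruct (Rle_dec _ _); nra. }
  intros y Hy r Hr.
  set (y1 := vscal W (/ c) y).
  assert (Hy1 : nu W y1 s0 > 1 - s0).
  { unfold y1. rewrite nu_scal_pos; [|apply Rinv_0_lt_compat; lra|lra].
    replace (s0 / / c) with (s0 * c) by (field; lra).
    pose proof (Rmin_l (s0 * c) s0). pose proof (Rmin_r (s0 * c) s0).
    pose proof (nu_mono W y _ _ H). lra. }
  set (rho := Rmin r (r / c) / 2).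
  assert (Hrho : 0 < rho).
  { unfold rho, Rmin; destruct (Rle_dec _ _); [lra|]. assert (0 < r / c) by (apply Rdiv_lt_0_compat; lra). lra. }
  assert (Hz1 : Nbd y0 s0 (vsub y0 y1)) by (unfold Nbd; rewrite vsub_sub_self; exact Hy1).
  destruct (Hcl _ Hz1 rho Hrho) as [a1 [[x1 [Hx1 Ea1]] Ha1]].
  destruct (Hcl y0 (Nrefl W y0 s0 Hs0) rho Hrho) as [a2 [[x2 [Hx2 Ea2]] Ha2]].
  subst a1 a2.
  exists (vscal V c (vsub x2 x1)). split.
  - rewrite nu_scal_pos by lra. replace (t / c) with (N + N) by (unfold c; field; lra).
    unfold vsub. pose proof (nu_tri V x2 (vopp V x1) N N). rewrite nu_opp in H.
    unfold Rmin in H; destruct (Rle_dec _ _); fold N in Hx1, Hx2; lra.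
  - unfold Nbd.
    rewrite (proj2 hT), (lin_vsub V W T hT).
    replace y with (vscal W c y1) by (unfold y1; apply vscal_inv; lra).
    rewrite <- vscal_sub, nu_scal_pos by lra.
    rewrite (vA3 W y0 y1 (T x2) (T x1)).
    unfold Nbd in Ha1, Ha2.
    assert (E : vsub (vsub y0 (T x2)) (vsub (vsub y0 y1) (T x1)) =
                vadd W (vsub y0 (T x2)) (vopp W (vsub (vsub y0 y1) (T x1)))) by reflexivity.
    rewrite E.
    assert (Hr2 : rho + rho <= r / c).
    { unfold rho. pose proof (Rmin_r r (r/c)). lra. }
    assert (Hr3 : rho + rho <= r).
    { unfold rho. pose proof (Rmin_l r (r/c)). lra. }
    pose proof (U_add W (vsub y0 (T x2)) (vopp W (vsub (vsub y0 y1) (T x1))) rho rho Ha2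
               ltac:(rewrite nu_opp; exact Ha1)) as H2.
    pose proof (nu_mono W (vadd W (vsub y0 (T x2)) (vopp W (vsub (vsub y0 y1) (T x1)))) _ _ Hr2).
    lra.
Qed.

Lemma openness (V W : PNSpace) (T : V -> W) (hT : in_B T) (Tinv : W -> V)
  (hr : forall y, T (Tinv y) = y) (hV : strongly_complete V) (hW : strongly_complete W) :
  forall t, 0 < t -> exists s, 0 < s /\ forall y, nu W y s > 1 - s ->
    exists x, nu V x t > 1 - t /\ T x = y.
Proof.
  intros t Ht. destruct hT as [hL hC].
  set (h := / 2). assert (Hh : 0 < h < 1) by (unfold h; lra).
  assert (Hpow : forall k, 0 < h ^ k) by (intro; apply pow_lt; lra).
  set (tk := fun k => t / 4 * h ^ k).
  assert (Htk : forall k, 0 < tk k) by (intro; unfold tk; pose proof (Hpow k); nra).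
  assert (Hd : forall k, exists s, 0 < s /\ forall y, nu W y s > 1 - s ->
    forall r, 0 < r -> exists x, nu V x (tk k) > 1 - tk k /\ Nbd y r (T x)).
  { intro k. apply (density V W T hL Tinv hr hW). apply Htk. }
  set (sf := fun k => proj1_sig (constructive_indefinite_description _ (Hd k))).
  assert (Hsf : forall k, 0 < sf k /\ forall y, nu W y (sf k) > 1 - sf k ->
    forall r, 0 < r -> exists x, nu V x (tk k) > 1 - tk k /\ Nbd y r (T x)).
  { intro k. unfold sf. destruct (constructive_indefinite_description _ _) as [s Hs]. exact Hs. }
  clearbody sf.
  set (sg := fun k => Rmin (sf k) (h ^ k)).
  assert (Hsg : forall k, 0 < sg k).
  { intro k. unfold sg, Rmin. destruct (Rle_dec _ _); [apply Hsf | apply Hpow]. }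
  assert (Hsgh : forall k, sg k <= h ^ k) by (intro; apply Rmin_r).
  assert (Dsg : forall k y, nu W y (sg k) > 1 - sg k ->
    forall r, 0 < r -> exists x, nu V x (tk k) > 1 - tk k /\ Nbd y r (T x)).
  { intros k y Hy. apply Hsf. eapply U_mono; [|exact Hy]. apply Rmin_l. }
  exists (sg 0%nat). split; [apply Hsg|]. intros y Hy.
  assert (Hst : forall k (e : W), exists x : V, nu W e (sg k) > 1 - sg k ->
     nu V x (tk k) > 1 - tk k /\ nu W (vsub e (T x)) (sg (S k)) > 1 - sg (S k)).
  { intros k e. destruct (classic (nu W e (sg k) > 1 - sg k)) as [He|He].
    - destruct (Dsg k e He (sg (S k)) (Hsg _)) as [x Hx]. exists x. intros _. exact Hx.
    - exists (vzero V). intro; contradiction. }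
  set (stp := fun k e => proj1_sig (constructive_indefinite_description _ (Hst k e))).
  assert (Hstp : forall k e, nu W e (sg k) > 1 - sg k ->
     nu V (stp k e) (tk k) > 1 - tk k /\ nu W (vsub e (T (stp k e))) (sg (S k)) > 1 - sg (S k)).
  { intros k e. unfold stp. destruct (constructive_indefinite_description _ _) as [x Hx]. exact Hx. }
  clearbody stp.
  set (es := fix f (n : nat) : W := match n with O => y | S n => vsub (f n) (T (stp n (f n))) end).
  set (xs := fun n => stp n (es n)).
  assert (Hes : forall n, nu W (es n) (sg n) > 1 - sg n).
  { induction n. exact Hy. apply (Hstp n (es n) IHn). }
  assert (Hxs : forall n, nu V (xs n) (tk n) > 1 - tk n).
  { intro n. apply (Hstp n (es n) (Hes n)). }
  set (Ss := fix g (n : nat) : V := match n with O => xs O | S n => vadd V (g n) (xs (S n)) end).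
  assert (HeS : forall n, es (S n) = vsub y (T (Ss n))).
  { induction n. reflexivity.
    change (es (S (S n))) with (vsub (es (S n)) (T (xs (S n)))).
    rewrite IHn, vsub_add, <- (proj1 hL). reflexivity. }
  assert (HS : forall n, nu V (Ss n) (t/2 - t/4 * h ^ n) > 1 - (t/2 - t/4 * h ^ n)).
  { induction n.
    - simpl. replace (t/2 - t/4*1) with (tk O) by (unfold tk; simpl; field). apply Hxs.
    - change (Ss (S n)) with (vadd V (Ss n) (xs (S n))).
      pose proof (U_add V _ _ _ _ IHn (Hxs (S n))) as H.
      replace (t / 2 - t / 4 * h ^ n + tk (S n)) with (t/2 - t/4 * h ^ S n) in H
        by (unfold tk, h; simpl; field).
      exact H. }
  assert (HSd : forall n d, nu V (vsub (Ss (S d + n)%nat) (Ss n)) (t/4 * h ^ n - t/4 * h ^ (S d + n))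
                            > 1 - (t/4 * h ^ n - t/4 * h ^ (S d + n))).
  { intros n d. induction d.
    - simpl (S 0 + n)%nat. change (Ss (S n)) with (vadd V (Ss n) (xs (S n))).
      rewrite vsub_addl, vsub_xx, vadd_0l.
      replace (t / 4 * h ^ n - t / 4 * h ^ S n) with (tk (S n)) by (unfold tk, h; simpl; field).
      apply Hxs.
    - change (Ss (S (S d) + n)%nat) with (vadd V (Ss (S d + n)%nat) (xs (S (S d) + n)%nat)).
      rewrite vsub_addl.
      pose proof (U_add V _ _ _ _ IHd (Hxs (S (S d) + n)%nat)) as H.
      replace (t / 4 * h ^ n - t / 4 * h ^ (S d + n) + tk (S (S d) + n)%nat)
        with (t / 4 * h ^ n - t / 4 * h ^ (S (S d) + n)) in H
        by (unfold tk, h; simpl; field).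
      exact H. }
  assert (HSm : forall n m, (n < m)%nat -> nu V (vsub (Ss m) (Ss n)) (t/4 * h ^ n) > 1 - t/4 * h ^ n).
  { intros n m Hnm. replace m with (S (m - S n) + n)%nat by lia.
    eapply U_mono; [|apply HSd]. pose proof (Hpow (S (m - S n) + n)%nat). nra. }
  assert (HC : strongly_Cauchy Ss).
  { intros eps Heps.
    destruct (pow_lt_1_zero h ltac:(rewrite Rabs_right; lra) (4 * eps / t)
       ltac:(apply Rdiv_lt_0_compat; lra)) as [N HN].
    exists N. intros m n Hm Hn.
    assert (Hb : forall k, (N <= k)%nat -> t/4 * h ^ k <= eps).
    { intros k Hk. pose proof (HN k Hk). rewrite Rabs_right in H by (apply Rle_ge, Rlt_le, Hpow).
      apply Rmult_lt_compat_l with (r := t/4) in H; [|lra].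
      replace (t / 4 * (4 * eps / t)) with eps in H by (field; lra). lra. }
    destruct (lt_eq_lt_dec m n) as [[Hlt|Heq']|Hgt].
    - eapply U_mono; [|apply HSm; exact Hlt]. apply Hb. lia.
    - subst. rewrite vsub_xx. apply U_zero; auto.
    - rewrite nu_sub_sym. eapply U_mono; [|apply HSm; exact Hgt]. apply Hb. lia. }
  destruct (hV Ss HC) as [x Hx].
  exists x. split.
  - destruct (Hx (t/2) ltac:(lra)) as [N HN]. pose proof (HN N (le_n _)) as H1. unfold Nbd in H1.
    assert (H2 : nu V (Ss N) (t/2) > 1 - t/2).
    { eapply U_mono; [|apply HS]. pose proof (Hpow N). nra. }
    pose proof (U_add V _ _ _ _ H1 H2) as H3. rewrite <- vsub_decomp in H3.
    replace (t/2 + t/2) with t in H3 by field. exact H3.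
  - apply Heq. intros r Hr.
    destruct (cont_at V W T hC x (r/2) ltac:(lra)) as [e [He He2]].
    destruct (Hx e He) as [N1 HN1].
    destruct (pow_lt_1_zero h ltac:(rewrite Rabs_right; lra) (r/2) ltac:(lra)) as [N2 HN2].
    set (n := Nat.max N1 N2).
    pose proof (He2 _ (HN1 n (Nat.le_max_l _ _))) as A1.
    pose proof (Hes (S n)) as A2. rewrite HeS in A2.
    pose proof (HN2 (S n) ltac:(unfold n; lia)) as A3.
    rewrite Rabs_right in A3 by (apply Rle_ge, Rlt_le, Hpow).
    assert (A4 : Nbd y (r/2) (T (Ss n))).
    { unfold Nbd. eapply U_mono; [|exact A2]. pose proof (Hsgh (S n)). lra. }
    replace r with (r/2 + r/2) by field. eapply Ntri; [exact A1|]. apply Nsym. exact A4.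
Qed.

Theorem corollary4p6 (V W : PNSpace) (T : V -> W)
  (hV : strongly_complete V) (hW : strongly_complete W)
  (hT : in_B T)
  (hinj : forall x y, T x = T y -> x = y)
  (hsurj : forall y, exists x, T x = y)
  (Tinv : W -> V)
  (hl : forall x, Tinv (T x) = x) (hr : forall y, T (Tinv y) = y) :
  in_B Tinv.
Proof.
  assert (HL : is_linear Tinv).
  { destruct hT as [[h1 h2] _]. split.
    - intros x y. rewrite <- (hr x), <- (hr y) at 1. rewrite <- h1, hl. reflexivity.
    - intros a x. rewrite <- (hr x) at 1. rewrite <- h2, hl. reflexivity. }
  split; [exact HL|].
  intros O HO p Hp. destruct (HO (Tinv p) Hp) as [t [Ht Ht2]].
  destruct (openness V W T hT Tinv hr hV hW t Ht) as [s [Hs Hs2]].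
  exists s. split; auto. intros q Hq. apply Ht2.
  destruct (Hs2 _ Hq) as [x [Hx Ex]].
  unfold Nbd. rewrite <- (lin_vsub W V Tinv HL), <- Ex, hl. exact Hx.
Qed.
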